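(* The axioms (S1)–(S5) are independent: for each $i\in\{1,2,3,4,5\}$ there is a structure $\langle M,\mathsf{S}\rangle$, with $M$ a non-empty set and $\mathsf{S}\subseteq M\times\mathcal{P}(M)$, that satisfies every axiom (S$j$) with $j\neq i$ but does not satisfy (S$i$).
   Context: For a set $M$ and a relation $\mathsf{S}\subseteq M\times\mathcal{P}(M)$ define: $x\sqsubseteq_{\mathsf{S}} y$ iff there is $X\subseteq M$ with $y\,\mathsf{S}\,X$ and $x\in X$; $\mathrm{I}(x)=\{y\in M\mid y\sqsubseteq_{\mathsf{S}} x\}$ and for $A\subseteq M$, $\mathrm{I}(A)=\bigcup_{a\in A}\mathrm{I}(a)$; $x$ s-overlaps $y$ iff there are $X,Y\subseteq M$ with $x\,\mathsf{S}\,X$, $y\,\mathsf{S}\,Y$, $X\cap Y\neq\emptyset$; a set $A\subseteq M$ is pre-dense in $B\subseteq M$ iff for every $b\in B$ there is $a\in A$ such that $a$ s-overlaps $b$. Axioms (all variables range over $M$, capital letters over subsets of $M$): (S1) for every non-empty $X\subseteq M$ there is $x\in M$ with $x\,\mathsf{S}\,X$; (S2) $x\,\mathsf{S}\,X\wedge y\,\mathsf{S}\,X\to x=y$; (S3) $x\,\mathsf{S}\,X\wedge y\,\mathsf{S}\,Y\wedge x\in Y\to y\,\mathsf{S}\,(X\cup Y)$; (S4) if $x\,\mathsf{S}\,X$, $x\,\mathsf{S}\,Y$ and $y\in Y$, then there are $z\in X$ and $Z,U\subseteq M$ with $z\,\mathsf{S}\,Z$, $y\,\mathsf{S}\,U$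 and $Z\cap U\neq\emptyset$; (S5) for all $x\in M$ and $X\subseteq M$: if $X$ is pre-dense in $\mathrm{I}(x)$ then $x\,\mathsf{S}\,(\mathrm{I}(x)\cap\mathrm{I}(X))$. *)

(* Defs.v *)
(* Subsets of M are predicates M -> Prop (P(M)); a structure
   <M, S> is a type M with a relation S : M -> (M -> Prop) -> Prop. *)

Section StructAx.
Variable M : Type.
Variable S : M -> (M -> Prop) -> Prop.

Definition setU (X Y : M -> Prop) : M -> Prop := fun z => X z \/ Y z.

Definition sle (x y : M) : Prop := exists X, S y X /\ X x.

Definition Iof (x : M) : M -> Prop := fun y => sle y x.

Definition IofSet (A : M -> Prop) : M -> Prop :=
  fun y => exists a, A a /\ Iof a y.

Definition soverlaps (x y : M) : Prop :=
  exists X Y, S x X /\ S y Y /\ exists z, X z /\ Y z.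

Definition predense (A B : M -> Prop) : Prop :=
  forall b, B b -> exists a, A a /\ soverlaps a b.

Definition axS1 : Prop :=
  forall X : M -> Prop, (exists x, X x) -> exists x, S x X.

Definition axS2 : Prop :=
  forall (x y : M) (X : M -> Prop), S x X -> S y X -> x = y.

Definition axS3 : Prop :=
  forall (x y : M) (X Y : M -> Prop), S x X -> S y Y -> Y x -> S y (setU X Y).

Definition axS4 : Prop :=
  forall (x y : M) (X Y : M -> Prop), S x X -> S x Y -> Y y ->
    exists z (Z U : M -> Prop), X z /\ S z Z /\ S y U /\ exists w, Z w /\ U w.

Definition axS5 : Prop :=
  forall (x : M) (X : M -> Prop), predense X (Iof x) ->
    S x (fun y => Iof x y /\ IofSet X y).

Definition ax_nr (i : nat) : Prop :=
  match i with
  | 1 => axS1 | 2 => axS2 | 3 => axS3 | 4 => axS4 | 5 => axS5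
  | _ => True
  end.

End StructAx.

(* Main.v *)
Require Import Defs.
From Stdlib Require Import Classical Lia.

Definition S_1 (_ : unit) (X : unit -> Prop) : Prop := forall y, ~ X y.

Lemma m1_1 : ~ axS1 unit S_1.
Proof. intro H. destruct (H (fun _ => True)) as [x Hx]. exists tt; exact I. exact (Hx tt I). Qed.
Lemma m1_2 : axS2 unit S_1.
Proof. intros [] [] X _ _; reflexivity. Qed.
Lemma m1_3 : axS3 unit S_1.
Proof. intros x y X Y _ HY Hx. destruct (HY x Hx). Qed.
Lemma m1_4 : axS4 unit S_1.
Proof. intros x y X Y _ HY Hy. destruct (HY y Hy). Qed.
Lemma m1_5 : axS5 unit S_1.
Proof. intros x X _ y [[Z [HZ Hy]] _]. exact (HZ y Hy). Qed.

Definition S_2 (_ : bool) (X : bool -> Prop) : Prop := exists z, X z.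

Lemma m2_1 : axS1 bool S_2.
Proof. intros X H. exists true. exact H. Qed.
Lemma m2_2 : ~ axS2 bool S_2.
Proof. intro H. assert (E : true = false). apply (H true false (fun _ => True)); exists true; exact I. discriminate. Qed.
Lemma m2_3 : axS3 bool S_2.
Proof. intros x y X Y _ _ Hx. exists x. right. exact Hx. Qed.
Lemma m2_4 : axS4 bool S_2.
Proof.
  intros x y X Y [z Hz] _ _. exists z, (fun _ => True), (fun _ => True).
  split; [exact Hz|]. split; [exists true; exact I|]. split; [exists true; exact I|].
  exists true; split; exact I.
Qed.
Lemma m2_I : forall x y, Iof bool S_2 x y.
Proof. intros x y. exists (fun w => w = y). split; [exists y; reflexivity | reflexivity]. Qed.
Lemma m2_5 : axS5 bool S_2.
Proof.
  intros x X Hp. destruct (Hp x (m2_I x x)) as [a [Ha _]].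
  exists a. split. apply m2_I. exists a. split; [exact Ha | apply m2_I].
Qed.

Definition S_4 (x : bool) (X : bool -> Prop) : Prop :=
  if x then exists z, X z else forall z, ~ X z.

Lemma m4_1 : axS1 bool S_4.
Proof. intros X H. exists true. exact H. Qed.
Lemma m4_2 : axS2 bool S_4.
Proof.
  intros [] [] X H1 H2; simpl in *; try reflexivity.
  - destruct H1 as [z Hz]; destruct (H2 z Hz).
  - destruct H2 as [z Hz]; destruct (H1 z Hz).
Qed.
Lemma m4_3 : axS3 bool S_4.
Proof.
  intros x [] X Y _ HY Hx; simpl in *.
  - exists x; right; exact Hx.
  - destruct (HY x Hx).
Qed.
Lemma m4_4 : ~ axS4 bool S_4.
Proof.
  intro H.
  destruct (H true false (fun z => z = true) (fun z => z = false)) as [z [Z [U [_ [_ [HU [w [_ Hw]]]]]]]].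
  - exists true; reflexivity.
  - exists false; reflexivity.
  - reflexivity.
  - exact (HU w Hw).
Qed.
Lemma m4_If : forall y, ~ Iof bool S_4 false y.
Proof. intros y [Z [HZ Hy]]. exact (HZ y Hy). Qed.
Lemma m4_It : forall y, Iof bool S_4 true y.
Proof. intros y. exists (fun w => w = y). split; [exists y; reflexivity | reflexivity]. Qed.
Lemma m4_5 : axS5 bool S_4.
Proof.
  intros [] X Hp; simpl.
  - destruct (Hp true (m4_It true)) as [a [Ha Hov]].
    exists a. split. apply m4_It. exists a. split; [exact Ha|].
    destruct a; [apply m4_It|].
    destruct Hov as [X1 [Y1 [H1 [_ [w [Hw _]]]]]]. destruct (H1 w Hw).
  - intros z [Hz _]. exact (m4_If z Hz).
Qed.

Definition S_5 (x : bool) (X : bool -> Prop) : Prop :=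
  if x then X true else X false /\ ~ X true.

Lemma m5_1 : axS1 bool S_5.
Proof.
  intros X [z Hz]. destruct (classic (X true)) as [Ht|Ht].
  - exists true; exact Ht.
  - exists false. destruct z; [contradiction|]. simpl; split; assumption.
Qed.
Lemma m5_2 : axS2 bool S_5.
Proof.
  intros [] [] X H1 H2; simpl in *; try reflexivity.
  - destruct H2 as [_ H2]; contradiction.
  - destruct H1 as [_ H1]; contradiction.
Qed.
Lemma m5_3 : axS3 bool S_5.
Proof.
  intros x [] X Y HX HY Hx; simpl in *; unfold setU.
  - right; exact HY.
  - destruct HY as [HY1 HY2]. destruct x; [contradiction|].
    simpl in HX. destruct HX as [HX1 HX2]. split; [left; exact HX1|].
    intros [H|H]; contradiction.
Qed.
Lemma m5_Sx : forall x X, S_5 x X -> X x.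
Proof. intros [] X H; simpl in H; [exact H | exact (proj1 H)]. Qed.
Lemma m5_4 : axS4 bool S_5.
Proof.
  intros x y X Y HX HY Hy. exists x, (fun w => w = x \/ w = y), (fun w => w = y).
  split; [exact (m5_Sx x X HX)|].
  assert (Hxy : x = false -> y = false).
  { intro E; subst x. simpl in HY. destruct HY as [_ HY]. destruct y; [contradiction|reflexivity]. }
  split.
  - destruct x; simpl. left; reflexivity.
    specialize (Hxy eq_refl). subst y. split; [left; reflexivity|].
    intros [H|H]; discriminate.
  - split.
    + destruct y; simpl. reflexivity. split; [reflexivity | discriminate].
    + exists y. split; [right; reflexivity | reflexivity].
Qed.
Lemma m5_5 : ~ axS5 bool S_5.
Proof.
  intro H. specialize (H true (fun w => w = false)).
  assert (Hp : predense bool S_5 (fun w => w = false) (Iof bool S_5 true)).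
  { intros b _. exists false. split; [reflexivity|].
    exists (fun w => w = false), (fun w => w = false \/ b = true). split.
    - simpl. split; [reflexivity | discriminate].
    - split.
      + destruct b; simpl. right; reflexivity.
        split; [left; reflexivity|]. intros [E|E]; discriminate.
      + exists false; split; [reflexivity | left; reflexivity]. }
  specialize (H Hp). simpl in H. destruct H as [_ [a [Ha [Z [HZ HZt]]]]].
  subst a. simpl in HZ. destruct HZ as [_ HZ]. contradiction.
Qed.

Inductive T3 := A | B | C.

Definition S_3 (x : T3) (X : T3 -> Prop) : Prop :=
  match x with
  | A => (exists z, X z) /\ ~ X C
  | B => X C /\ (X A \/ X B)
  | C => X C /\ ~ X A /\ ~ X B
  end.

Lemma m3_1 : axS1 T3 S_3.
Proof.
  intros X [z Hz]. destruct (classic (X C)) as [Hc|Hc].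
  - destruct (classic (X A \/ X B)) as [H|H].
    + exists B; simpl; split; assumption.
    + exists C; simpl; split; [assumption|]. split; intro; apply H; auto.
  - exists A; simpl; split; [exists z; exact Hz | exact Hc].
Qed.
Lemma m3_2 : axS2 T3 S_3.
Proof.
  intros [] [] X H1 H2; simpl in *; try reflexivity; exfalso; intuition.
Qed.
Lemma m3_3 : ~ axS3 T3 S_3.
Proof.
  intro H. specialize (H B A (fun w => w = B \/ w = C) (fun w => w = B)).
  assert (H1 : S_3 B (fun w => w = B \/ w = C)).
  { simpl. split; [right; reflexivity | right; left; reflexivity]. }
  assert (H2 : S_3 A (fun w => w = B)).
  { simpl. split; [exists B; reflexivity | discriminate]. }
  specialize (H H1 H2 eq_refl). simpl in H. destruct H as [_ H].
  apply H. left. right. reflexivity.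
Qed.

Lemma m3_ov : forall p q, ~ (p = A /\ q = C) -> ~ (p = C /\ q = A) -> soverlaps T3 S_3 p q.
Proof.
  intros p q H1 H2.
  set (wit := fun t : T3 => match t with A => (fun w => w = A) | B => (fun w => w = A \/ w = C) | C => (fun w => w = C) end).
  set (wit2 := fun t : T3 => match t with A => (fun w => w = A) | B => (fun w => w = C \/ w = B) | C => (fun w => w = C) end).
  destruct p, q; try (exfalso; tauto).
  all: first
   [ exists (wit A), (wit A); simpl; repeat split; [exists A; reflexivity| discriminate | exists A; reflexivity | discriminate | exists A; split; reflexivity]
   | idtac ].
  all: try (exists (fun w => w = A), (fun w => w = A \/ w = C); simpl;
            split; [split; [exists A; reflexivity | discriminate]|];
            split; [split; [right; reflexivity | left; left; reflexivity]|];
            exists A; split; [reflexivity | left; reflexivity]).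
  all: try (exists (fun w => w = A \/ w = C), (fun w => w = A); simpl;
            split; [split; [right; reflexivity | left; left; reflexivity]|];
            split; [split; [exists A; reflexivity | discriminate]|];
            exists A; split; [left; reflexivity | reflexivity]).
  all: try (exists (fun w => w = A \/ w = C), (fun w => w = A \/ w = C); simpl;
            split; [split; [right; reflexivity | left; left; reflexivity]|];
            split; [split; [right; reflexivity | left; left; reflexivity]|];
            exists A; split; left; reflexivity).
  all: try (exists (fun w => w = A \/ w = C), (fun w => w = C); simpl;
            split; [split; [right; reflexivity | left; left; reflexivity]|];
            split; [split; [reflexivity | split; discriminate]|];
            exists C; split; [right|]; reflexivity).
  all: try (exists (fun w => w = C), (fun w => w = A \/ w = C); simpl;
            split; [split; [reflexivity | split; discriminate]|];
            split; [split; [right; reflexivity | left; left; reflexivity]|];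
            exists C; split; [|right]; reflexivity).
  all: try (exists (fun w => w = C), (fun w => w = C); simpl;
            split; [split; [reflexivity | split; discriminate]|];
            split; [split; [reflexivity | split; discriminate]|];
            exists C; split; reflexivity).
Qed.

Lemma m3_nov : ~ soverlaps T3 S_3 A C.
Proof.
  intros [X [Y [HX [HY [w [Hw1 Hw2]]]]]]. simpl in HX, HY.
  destruct w; intuition.
Qed.

Lemma m3_fin : forall (y : T3) (X : T3 -> Prop) z, X z -> soverlaps T3 S_3 z y ->
  exists z (Z U : T3 -> Prop), X z /\ S_3 z Z /\ S_3 y U /\ exists w, Z w /\ U w.
Proof.
  intros y X z Hz [Z [U [HZ [HU HW]]]]. exists z, Z, U. auto.
Qed.

Lemma m3_4 : axS4 T3 S_3.
Proof.
  intros x y X Y HX HY Hy.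
  destruct y.
  - destruct x; simpl in HX, HY.
    + destruct HX as [[z Hz] HzC]. apply (m3_fin A X z Hz).
      apply m3_ov; intros [E1 E2]; subst; try discriminate; contradiction.
    + destruct HX as [_ [Ha|Hb]].
      * apply (m3_fin A X A Ha). apply m3_ov; intros [E1 E2]; discriminate.
      * apply (m3_fin A X B Hb). apply m3_ov; intros [E1 E2]; discriminate.
    + exfalso; intuition.
  - destruct x; simpl in HX, HY.
    + destruct HX as [[z Hz] _]. apply (m3_fin B X z Hz).
      apply m3_ov; intros [E1 E2]; discriminate.
    + apply (m3_fin B X C (proj1 HX)). apply m3_ov; intros [E1 E2]; discriminate.
    + apply (m3_fin B X C (proj1 HX)). apply m3_ov; intros [E1 E2]; discriminate.
  - destruct x; simpl in HX, HY.
    + exfalso; intuition.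
    + apply (m3_fin C X C (proj1 HX)). apply m3_ov; intros [E1 E2]; discriminate.
    + apply (m3_fin C X C (proj1 HX)). apply m3_ov; intros [E1 E2]; discriminate.
Qed.

Lemma m3_Irefl : forall x, Iof T3 S_3 x x.
Proof.
  intros []; simpl.
  - exists (fun w => w = A). simpl. split; [split; [exists A; reflexivity | discriminate] | reflexivity].
  - exists (fun w => w = B \/ w = C). simpl. split; [split; [right; reflexivity | right; left; reflexivity] | left; reflexivity].
  - exists (fun w => w = C). simpl. split; [split; [reflexivity | split; discriminate] | reflexivity].
Qed.
Lemma m3_IB : forall y, Iof T3 S_3 B y.
Proof.
  intros y. exists (fun _ => True). simpl. split; [split; [exact I | left; exact I] | exact I].
Qed.
Lemma m3_IAB : Iof T3 S_3 A B.
Proof. exists (fun w => w = B). simpl. split; [split; [exists B; reflexivity | discriminate] | reflexivity]. Qed.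
Lemma m3_IBA : Iof T3 S_3 B A.
Proof. apply m3_IB. Qed.
Lemma m3_IBC : Iof T3 S_3 B C.
Proof. apply m3_IB. Qed.
Lemma m3_nIAC : ~ Iof T3 S_3 A C.
Proof. intros [Z [HZ H]]. simpl in HZ. intuition. Qed.
Lemma m3_nIC : forall y, y <> C -> ~ Iof T3 S_3 C y.
Proof. intros y Hy [Z [HZ H]]. simpl in HZ. destruct y; intuition. Qed.

Lemma m3_ovC : forall p, soverlaps T3 S_3 p C -> p <> A.
Proof. intros p H E; subst; exact (m3_nov H). Qed.
Lemma m3_ovA : forall p, soverlaps T3 S_3 p A -> p <> C.
Proof.
  intros p H E; subst. apply m3_nov.
  destruct H as [X [Y [HX [HY [w [H1 H2]]]]]]. exists Y, X. split; [exact HY|]. split; [exact HX|]. exists w; split; assumption.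
Qed.

Lemma m3_5 : axS5 T3 S_3.
Proof.
  intros x X Hp. destruct x; simpl.
  - destruct (Hp A (m3_Irefl A)) as [p [Hpx Hov]]. apply m3_ovA in Hov.
    split.
    + exists p. split.
      * destruct p; [apply m3_Irefl | apply m3_IAB | contradiction].
      * exists p; split; [exact Hpx | apply m3_Irefl].
    + intros [H _]. exact (m3_nIAC H).
  - destruct (Hp C m3_IBC) as [p [Hpx Hov]]. apply m3_ovC in Hov.
    destruct (Hp A m3_IBA) as [q [Hqx Hov2]]. apply m3_ovA in Hov2.
    split.
    + split; [apply m3_IB|]. exists p. split; [exact Hpx|].
      destruct p; [contradiction | apply m3_IB | apply m3_Irefl].
    + destruct q; [left | right | contradiction]; (split; [apply m3_IB|]).
      * exists A; split; [exact Hqx | apply m3_Irefl].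
      * exists B; split; [exact Hqx | apply m3_Irefl].
  - destruct (Hp C (m3_Irefl C)) as [p [Hpx Hov]]. apply m3_ovC in Hov.
    split; [|split].
    + split; [apply m3_Irefl|]. exists p. split; [exact Hpx|].
      destruct p; [contradiction | apply m3_IB | apply m3_Irefl].
    + intros [H _]. exact (m3_nIC A ltac:(discriminate) H).
    + intros [H _]. exact (m3_nIC B ltac:(discriminate) H).
Qed.

Theorem theorem5p1 :
  forall i : nat, 1 <= i <= 5 ->
    exists (M : Type) (S : M -> (M -> Prop) -> Prop),
      inhabited M /\
      (forall j : nat, 1 <= j <= 5 -> j <> i -> ax_nr M S j) /\
      ~ ax_nr M S i.
Proof.
  intros i Hi.
  assert (i = 1 \/ i = 2 \/ i = 3 \/ i = 4 \/ i = 5) as Hc by lia.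
  destruct Hc as [E|[E|[E|[E|E]]]]; subst i.
  - exists unit, S_1. split; [constructor; exact tt|]. split; [|exact m1_1].
    intros j Hj Hne. assert (j = 1 \/ j = 2 \/ j = 3 \/ j = 4 \/ j = 5) as Hc by lia.
    destruct Hc as [E|[E|[E|[E|E]]]]; subst j; simpl;
      [contradiction | exact m1_2 | exact m1_3 | exact m1_4 | exact m1_5].
  - exists bool, S_2. split; [constructor; exact true|]. split; [|exact m2_2].
    intros j Hj Hne. assert (j = 1 \/ j = 2 \/ j = 3 \/ j = 4 \/ j = 5) as Hc by lia.
    destruct Hc as [E|[E|[E|[E|E]]]]; subst j; simpl;
      [exact m2_1 | contradiction | exact m2_3 | exact m2_4 | exact m2_5].
  - exists T3, S_3. split; [constructor; exact A|]. split; [|exact m3_3].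
    intros j Hj Hne. assert (j = 1 \/ j = 2 \/ j = 3 \/ j = 4 \/ j = 5) as Hc by lia.
    destruct Hc as [E|[E|[E|[E|E]]]]; subst j; simpl;
      [exact m3_1 | exact m3_2 | contradiction | exact m3_4 | exact m3_5].
  - exists bool, S_4. split; [constructor; exact true|]. split; [|exact m4_4].
    intros j Hj Hne. assert (j = 1 \/ j = 2 \/ j = 3 \/ j = 4 \/ j = 5) as Hc by lia.
    destruct Hc as [E|[E|[E|[E|E]]]]; subst j; simpl;
      [exact m4_1 | exact m4_2 | exact m4_3 | contradiction | exact m4_5].
  - exists bool, S_5. split; [constructor; exact true|]. split; [|exact m5_5].
    intros j Hj Hne. assert (j = 1 \/ j = 2 \/ j = 3 \/ j = 4 \/ j = 5) as Hc by lia.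
    destruct Hc as [E|[E|[E|[E|E]]]]; subst j; simpl;
      [exact m5_1 | exact m5_2 | exact m5_3 | exact m5_4 | contradiction].
Qed.
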